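(* Let $\Gamma=(N,A,u)$ be a finite normal form game with $N=\{1,\dots,n\}$, $n\ge2$, in which every player has the same strategy set $X$, so $A=X^n$. The following are equivalent: (i) $\Gamma$ is fully symmetric, i.e. $u_i=u_{\pi(i)}\circ\pi$ for every $i\in N$ and every $\pi\in S_N$; (ii) $\Gamma$ is standard symmetric and weakly anonymous; (iii) for each $i\in N$ and $\pi\in S_N$, $u_{\pi(i)}=u_i\circ\pi^{-1}$; (iv) for each $i\in N$ and each transposition $\tau\in T_N$, $u_i=u_{\tau(i)}\circ\tau$; (v) for each $i\in N$ and each transposition $\tau\in T_N$, $u_i=u_{\tau(i)}\circ\tau^{-1}$.
   Context: A finite normal form game $\Gamma=(N,A,u)$ consists of players $N$, non-empty finite strategy sets $A_i$, profiles $A=\times_{i\in N}A_i$ and utilities $u_i:A\to\mathbb{R}$. For $\pi\in S_N$ and $s\in A$ write $\pi(s)=(s_{\pi^{-1}(i)})_{i\in N}$, and for a function $f:A\to\mathbb{R}$, $f\circ\pi$ denotes $s\mapsto f(\pi(s))$. $T_N$ is the set of transpositions in $S_N$. $\Gamma$ is standard symmetric if there is a transitive subgroup $H\le S_N$ such that $u_i=u_{\pi(i)}\circ\pi$ for all $i\in N$ and $\pi\in H$. $\Gamma$ is weakly anonymous if for each $i\in N$ and each permutation $\pi\in S_N$ fixing $i$, $u_i=u_i\circ\pi$. *)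

(* Defs.v *)
From HB Require Import structures.
From mathcomp Require Import all_boot all_order all_algebra all_fingroup.
From mathcomp Require Import reals.
Set Implicit Arguments. Unset Strict Implicit. Unset Printing Implicit Defensive.

Definition profile (n : nat) (X : finType) := {ffun 'I_n -> X}.

Definition pact n (X : finType) (pi : {perm 'I_n}) (s : profile n X) : profile n X :=
  [ffun i => s (pi^-1 i)%g].

Definition compp n (X : finType) (R : Type) (f : profile n X -> R) (pi : {perm 'I_n}) :
  profile n X -> R := fun s => f (pact pi s).

Section Game.
Variables (R : realType) (n : nat) (X : finType) (u : 'I_n -> profile n X -> R).

Definition is_transposition (t : {perm 'I_n}) : Prop :=
  exists i j : 'I_n, i != j /\ t = tperm i j.

Definition fully_symmetric : Prop :=
  forall (i : 'I_n) (pi : {perm 'I_n}), u i = compp (u (pi i)) pi.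

Definition transitive_subgroup (H : {group {perm 'I_n}}) : Prop :=
  forall i j : 'I_n, exists2 pi, pi \in H & pi i = j.

Definition standard_symmetric : Prop :=
  exists H : {group {perm 'I_n}}, transitive_subgroup H /\
    forall (i : 'I_n) (pi : {perm 'I_n}), pi \in H -> u i = compp (u (pi i)) pi.

Definition weakly_anonymous : Prop :=
  forall (i : 'I_n) (pi : {perm 'I_n}), pi i = i -> u i = compp (u i) pi.
End Game.

(* Main.v *)
Require Import Defs.
From mathcomp Require Import all_boot all_order all_algebra all_fingroup.
From mathcomp Require Import reals.
From Stdlib Require Import FunctionalExtensionality.

Lemma pactM n (X : finType) (p q : {perm 'I_n}) (s : profile n X) :
  pact (p * q)%g s = pact q (pact p s).
Proof. by apply/ffunP => k; rewrite !ffunE invMg permM. Qed.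

Lemma pact1 n (X : finType) (s : profile n X) : pact 1%g s = s.
Proof. by apply/ffunP => k; rewrite !ffunE invg1 perm1. Qed.

Section S.
Variables (R : realType) (n : nat) (X : finType) (u : 'I_n -> profile n X -> R).

Definition Pt (i : 'I_n) (p : {perm 'I_n}) := forall s, u i s = u (p i) (pact p s).

Lemma PtE i p : Pt i p <-> u i = compp (u (p i)) p.
Proof.
split=> [H|H s]; first by apply: functional_extensionality.
by rewrite {1}H.
Qed.

Lemma PtM i p q : Pt i p -> Pt (p i) q -> Pt i (p * q)%g.
Proof. by move=> H1 H2 s; rewrite H1 H2 pactM permM. Qed.

Lemma Pt1 i : Pt i 1%g.
Proof. by move=> s; rewrite pact1 perm1. Qed.

Lemma FS_Pt : fully_symmetric u <-> forall i p, Pt i p.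
Proof. by split=> H i p; [apply/PtE | apply/PtE]. Qed.

Lemma trans_FS : (forall i t, is_transposition t -> Pt i t) -> forall i p, Pt i p.
Proof.
move=> H i p; case: (prod_tpermP p) => ts -> Hts.
elim: ts Hts i => [|t ts IH] /= Hts i; first by rewrite big_nil; apply: Pt1.
move/andP: Hts => [Ht Hts].
rewrite big_cons; apply: PtM; first by apply: H; exists t.1, t.2.
exact: IH.
Qed.
End S.

Theorem theorem3p15 (R : realType) (n : nat) (X : finType)
    (u : 'I_n -> profile n X -> R) :
  (2 <= n)%N ->
  [/\ (fully_symmetric u <-> standard_symmetric u /\ weakly_anonymous u),
      (fully_symmetric u <->
         forall (i : 'I_n) (pi : {perm 'I_n}), u (pi i) = compp (u i) (pi^-1)%g),
      (fully_symmetric u <->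
         forall (i : 'I_n) (t : {perm 'I_n}), is_transposition t ->
           u i = compp (u (t i)) t) &
      (fully_symmetric u <->
         forall (i : 'I_n) (t : {perm 'I_n}), is_transposition t ->
           u i = compp (u (t i)) (t^-1)%g)].
Proof.
move=> _.
have E4 : fully_symmetric u <->
         forall (i : 'I_n) (t : {perm 'I_n}), is_transposition t ->
           u i = compp (u (t i)) t.
  split=> [H i t _|H]; first exact: H.
  apply/FS_Pt; apply: trans_FS => i t Ht; apply/PtE; exact: H.
split => //.
- split=> [H|[[G [HT HG]] HW]].
    split; last by move=> i p Hp; have := H i p; rewrite Hp.
    exists [set: {perm 'I_n}]%G; split; last by move=> i p _; apply: H.
    by move=> i j; exists (tperm i j); rewrite ?inE ?tpermL.
  apply/FS_Pt => i p.
  have [h hG hi] := HT i (p i).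
  have Hs : (p * h^-1)%g i = i by rewrite permM -hi permK.
  have -> : p = ((p * h^-1) * h)%g by rewrite -mulgA mulVg mulg1.
  apply: PtM; first by apply/PtE; rewrite Hs; apply: HW.
  by rewrite Hs; apply/PtE; apply: HG.
- split=> [H i p|H i p].
    by have := H (p i) (p^-1)%g; rewrite permK.
  by have := H (p i) (p^-1)%g; rewrite permK invgK.
- rewrite E4; split=> H i t Ht;
    (have Hinv : (t^-1 = t)%g by case: Ht => a [b [_ ->]]; rewrite tpermV);
    [rewrite Hinv; exact: H | by have := H i t Ht; rewrite Hinv].
Qed.
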